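(* Let $n\ge1$ be an integer. There exists a constant $c_1=c_1(n)>0$ such that for all pairwise distinct points $z_1,z_2,z_3\in\mathbb{R}^2$, $$p_1(z_1,z_2,z_3)+p_2(z_1,z_2,z_3)\ge c_1\,c(z_1,z_2,z_3)^2.$$
   Context: For $i=1,2$ and $x\in\mathbb{R}^2\setminus\{0\}$, $K_i(x)=x_i^{2n-1}/|x|^{2n}$, and $p_i(z_1,z_2,z_3)=K_i(z_1-z_2)K_i(z_1-z_3)+K_i(z_2-z_1)K_i(z_2-z_3)+K_i(z_3-z_1)K_i(z_3-z_2)$. The Menger curvature $c(z_1,z_2,z_3)$ is the inverse of the radius of the circle through $z_1,z_2,z_3$ (equal to $0$ if the points are collinear). *)

(* Defs.v *)
From Stdlib Require Import Reals.
Open Scope R_scope.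

Definition pt := (R * R)%type.
Definition psub (a b : pt) : pt := (fst a - fst b, snd a - snd b).
Definition norm2 (x : pt) : R := fst x ^ 2 + snd x ^ 2.
Definition dist (a b : pt) : R := sqrt (norm2 (psub a b)).

Definition K1 (n : nat) (x : pt) : R := fst x ^ (2 * n - 1) / (norm2 x) ^ n.
Definition K2 (n : nat) (x : pt) : R := snd x ^ (2 * n - 1) / (norm2 x) ^ n.

Definition psym (K : pt -> R) (z1 z2 z3 : pt) : R :=
  K (psub z1 z2) * K (psub z1 z3) + K (psub z2 z1) * K (psub z2 z3)
  + K (psub z3 z1) * K (psub z3 z2).

Definition p1 (n : nat) := psym (K1 n).
Definition p2 (n : nat) := psym (K2 n).

Definition collinear (z1 z2 z3 : pt) : Prop :=
  (fst z2 - fst z1) * (snd z3 - snd z1) - (snd z2 - snd z1) * (fst z3 - fst z1) = 0.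

Definition is_menger (z1 z2 z3 : pt) (c : R) : Prop :=
  (collinear z1 z2 z3 /\ c = 0) \/
  (~ collinear z1 z2 z3 /\
   exists (w : pt) (r : R), 0 < r /\ dist z1 w = r /\ dist z2 w = r /\
     dist z3 w = r /\ c = / r).

(* Main.v *)
Require Import Defs.
From Stdlib Require Import Reals.
Open Scope R_scope.
From Stdlib Require Import Lra Lia Psatz.


Definition Eb (j : nat) (u v : R) := u^(S j) - v^(S j) - INR (S j) * v^j * (u - v).

Lemma Eb_rec j u v : Eb (S j) u v = u * Eb j u v + INR (S j) * v^j * (u-v)^2.
Proof. unfold Eb. rewrite !S_INR. simpl. ring. Qed.

Lemma prod3_nonneg j v w : 0 <= v -> 0 <= INR (S j) * v^j * w^2.
Proof. intros. apply Rmult_le_pos; [apply Rmult_le_pos|]. apply pos_INR. apply pow_le; lra. apply pow2_ge_0. Qed.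

Lemma Eb_ge0 j u v : 0 <= u -> 0 <= v -> 0 <= Eb j u v.
Proof.
  intros Hu Hv. induction j.
  - unfold Eb. simpl. lra.
  - rewrite Eb_rec. pose proof (prod3_nonneg j v (u-v) Hv). nra.
Qed.

Lemma Eb_ge k u v : 0 <= u -> 0 <= v -> u^k * (u-v)^2 <= Eb (S k) u v.
Proof.
  intros Hu Hv. induction k.
  - unfold Eb. simpl. lra.
  - rewrite Eb_rec. pose proof (prod3_nonneg (S k) v (u-v) Hv).
    assert (u * (u ^ k * (u - v) ^ 2) <= u * Eb (S k) u v) by (apply Rmult_le_compat_l; lra).
    replace (u^(S k)) with (u*u^k) by (simpl; ring). nra.
Qed.

Definition gg (m : nat) (t : R) := (1 + t^2)^(S m).
Definition Dg m p y := gg m p - gg m y - 2 * INR (S m) * y * (1+y^2)^m * (p - y).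

Lemma Dg_eq m p y : Dg m p y = Eb m (1+p^2) (1+y^2) + INR (S m) * (1+y^2)^m * (p-y)^2.
Proof. unfold Dg, gg, Eb. ring. Qed.

Lemma Dg_B1 m p y : INR (S m) * (1+y^2)^m * (p-y)^2 <= Dg m p y.
Proof. rewrite Dg_eq. pose proof (Eb_ge0 m (1+p^2) (1+y^2)). pose proof (pow2_ge_0 p). pose proof (pow2_ge_0 y). 
  assert (0 <= Eb m (1 + p ^ 2) (1 + y ^ 2)) by (apply Eb_ge0; lra). lra. Qed.

Lemma inv_le_of (c X Y : R) : 0 < c -> X <= c * Y -> / c * X <= Y.
Proof. intros Hc H. apply (Rmult_le_reg_l c); auto. rewrite <- Rmult_assoc, Rinv_r by lra. lra. Qed.

Lemma Dg_B2 m p y : / 8^m * ((p-y)^2 * (1+p^2)^m) <= Dg m p y.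
Proof.
  set (u := 1 + p^2). set (v := 1 + y^2). set (d := p - y).
  assert (Hu : 1 <= u) by (unfold u; nra). assert (Hv : 1 <= v) by (unfold v; nra).
  assert (Hd : 0 <= d^2) by apply pow2_ge_0.
  apply inv_le_of. apply pow_lt; lra.
  rewrite Dg_eq. fold u v. fold d.
  destruct m as [|k].
  - unfold Eb. simpl. lra.
  - pose proof (Eb_ge k u v ltac:(lra) ltac:(lra)) as HE.
    assert (HI : 1 <= INR (S (S k))) by (rewrite S_INR; pose proof (pos_INR (S k)); lra).
    assert (Hvp : 1 <= v^(S k)) by (apply pow_R1_Rle; lra).
    assert (Hup : 1 <= u^(S k)) by (apply pow_R1_Rle; lra).
    assert (Huk : 1 <= u^k) by (apply pow_R1_Rle; lra).
    assert (H1 : v^(S k) * d^2 <= INR (S (S k)) * v^(S k) * d^2) by (assert (0 <= v^(S k)*d^2) by nra; nra).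
    assert (Huv : (u - v)^2 = d^2 * (p+y)^2) by (unfold u, v, d; ring).
    destruct (Rle_or_lt (p^2) (4*y^2)) as [C1|C1].
    +
      assert (H4 : u^(S k) <= 4^(S k) * v^(S k)).
      { rewrite <- Rpow_mult_distr. apply pow_incr. unfold u, v. nra. }
      assert (H48 : 4^(S k) <= 8^(S k)) by (apply pow_incr; lra).
      assert (0 <= d^2 * v^(S k)) by nra.
      assert (d^2 * u^(S k) <= 8^(S k) * (v^(S k) * d^2)) by nra.
      assert (0 <= u^k * (u-v)^2) by (apply Rmult_le_pos; [lra|apply pow2_ge_0]).
      assert (8^(S k) * (v^(S k) * d^2) <= 8^(S k) * (Eb (S k) u v + INR (S (S k)) * v ^ S k * d ^ 2)).
      { apply Rmult_le_compat_l. apply pow_le; lra. lra. }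
      lra.
    + assert (Hpy : p^2/4 <= (p+y)^2) by nra.
      destruct (Rle_or_lt 1 (p^2)) as [C2|C2].
      * assert (H8 : 8 <= 8^(S k)) by (simpl; pose proof (pow_R1_Rle 8 k); nra).
        assert (u/8 <= (p+y)^2) by (unfold u; lra).
        assert (Hus : u^(S k) = u * u^k) by (simpl; ring).
        assert (u^k * (u - v)^2 >= d^2 * u^(S k) / 8).
        { rewrite Huv, Hus. assert (0 <= u^k * d^2) by nra.
          assert (u^k*d^2 * (u/8) <= u^k*d^2*(p+y)^2) by (apply Rmult_le_compat_l; lra). lra. }
        assert (d^2 * u^(S k) <= 8^(S k) * (d^2 * u^(S k) / 8)).
        { assert (0 <= d^2 * u^(S k) / 8) by (apply Rmult_le_pos; [nra|lra]). nra. }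
        assert (0 <= v^(S k) * d^2) by nra.
        assert (8^(S k) * (d^2 * u^(S k) / 8) <= 8^(S k) * (Eb (S k) u v + INR (S (S k)) * v ^ S k * d ^ 2)).
        { apply Rmult_le_compat_l. apply pow_le; lra. lra. }
        lra.
      * assert (H28 : u^(S k) <= 8^(S k)) by (apply pow_incr; unfold u; nra).
        assert (d^2 * u^(S k) <= 8^(S k) * d^2) by nra.
        assert (0 <= u^k * (u-v)^2) by (apply Rmult_le_pos; [lra|apply pow2_ge_0]).
        assert (8^(S k) * d^2 <= 8^(S k) * (Eb (S k) u v + INR (S (S k)) * v ^ S k * d ^ 2)).
        { apply Rmult_le_compat_l. apply pow_le; lra. nra. }
        lra.
Qed.

Definition DD m x y z := gg m x / ((x-y)*(x-z)) + gg m y / ((y-x)*(y-z)) + gg m z / ((z-x)*(z-y)).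
Definition kap m := / (2 * 72^m).

Lemma DD_split m x y z : x < y -> y < z ->
  DD m x y z = (Dg m z y / (z-y) + Dg m x y / (y-x)) / (z-x).
Proof. intros. unfold DD, Dg. field. repeat split; lra. Qed.

Lemma div_lb A d D : 0 < d -> A * d^2 <= D -> A * d <= D / d.
Proof. intros Hd H. apply (Rmult_le_reg_r d); auto. replace (D / d * d) with D by (field; lra). replace (A*d*d) with (A*d^2) by (unfold Rdiv; ring). lra. Qed.

Lemma div_lb2 A B d : 0 < d -> A * d <= B -> A <= B / d.
Proof. intros Hd H. apply (Rmult_le_reg_r d); auto. replace (B / d * d) with B by (field; lra). lra. Qed.

Lemma DD_ord m x y z : x < y -> y < z ->
  kap m * (1+y^2)^m <= DD m x y z /\ kap m * (1+z^2)^m <= DD m x y z.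
Proof.
  intros Hxy Hyz. rewrite DD_split by auto.
  set (Ux := (1+x^2)^m). set (Uy := (1+y^2)^m). set (Uz := (1+z^2)^m).
  assert (HUx : 1 <= Ux) by (apply pow_R1_Rle; nra).
  assert (HUy : 1 <= Uy) by (apply pow_R1_Rle; nra).
  assert (HUz : 1 <= Uz) by (apply pow_R1_Rle; nra).
  assert (E8 : 1 <= 8^m) by (apply pow_R1_Rle; lra).
  assert (E9 : 1 <= 9^m) by (apply pow_R1_Rle; lra).
  assert (E72 : 72^m = 8^m * 9^m) by (rewrite <- Rpow_mult_distr; f_equal; lra).
  assert (HI : 1 <= INR (S m)) by (rewrite S_INR; pose proof (pos_INR m); lra).
  assert (T1a : INR (S m) * Uy * (z - y) <= Dg m z y / (z-y)).
  { apply div_lb. lra. apply Dg_B1. }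
  assert (T2a : INR (S m) * Uy * (y - x) <= Dg m x y / (y-x)).
  { apply div_lb. lra. replace ((y-x)^2) with ((x-y)^2) by (unfold Rdiv; ring). apply Dg_B1. }
  assert (T1b : / 8^m * Uz * (z - y) <= Dg m z y / (z-y)).
  { apply div_lb. lra. pose proof (Dg_B2 m z y). fold Uz in H. lra. }
  assert (T2b : / 8^m * Ux * (y - x) <= Dg m x y / (y-x)).
  { apply div_lb. lra. pose proof (Dg_B2 m x y). fold Ux in H. replace ((y-x)^2) with ((x-y)^2) by (unfold Rdiv; ring). lra. }
  assert (Hk8 : 0 < / 8^m) by (apply Rinv_0_lt_compat; lra).
  assert (T1c : 0 <= Dg m z y / (z-y)).
  { assert (0 <= /8^m*Uz*(z-y)) by (repeat apply Rmult_le_pos; lra). lra. }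
  assert (T2c : 0 <= Dg m x y / (y-x)).
  { assert (0 <= /8^m*Ux*(y-x)) by (repeat apply Rmult_le_pos; lra). lra. }
  assert (Hkap : kap m = / 8^m * / 9^m / 2) by (unfold kap; rewrite E72; field; lra).
  assert (Hk9 : 0 < / 9^m) by (apply Rinv_0_lt_compat; lra).
  assert (Hk9' : / 9^m <= 1) by (rewrite <- Rinv_1; apply Rinv_le_contravar; lra).
  assert (Hk8' : / 8^m <= 1) by (rewrite <- Rinv_1; apply Rinv_le_contravar; lra).
  assert (Hsum : Uy*(z-x) <= INR (S m) * Uy * (z - y) + INR (S m) * Uy * (y - x)).
  { replace (INR (S m) * Uy * (z - y) + INR (S m) * Uy * (y - x)) with (Uy*(z-x) + (INR (S m) - 1)*Uy*(z-x)) by (unfold Rdiv; ring).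
    assert (0 <= (INR (S m) - 1)*Uy*(z-x)) by (repeat apply Rmult_le_pos; lra). lra. }
  assert (Hk89 : / 8^m * / 9^m / 2 <= 1).
  { assert (/ 8^m * / 9^m <= 1 * 1) by (apply Rmult_le_compat; lra). lra. }
  split.
  - apply div_lb2. lra. rewrite Hkap.
    assert (/ 8^m * / 9^m / 2 * Uy * (z-x) <= Uy * (z-x)).
    { replace (/ 8^m * / 9^m / 2 * Uy * (z-x)) with ((/ 8^m * / 9^m / 2) * (Uy * (z-x))) by (unfold Rdiv; ring).
      assert (0 <= Uy*(z-x)) by nra.
      assert ((/ 8^m * / 9^m / 2) * (Uy * (z-x)) <= 1 * (Uy * (z-x))) by (apply Rmult_le_compat_r; lra).
      lra. }
    lra.
  - apply div_lb2. lra. rewrite Hkap.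
    destruct (Rle_or_lt (z-x) (2*(z-y))) as [C1|C1].
    + assert (0 <= /8^m * Uz) by nra.
      assert (/ 8^m * Uz * (z-x) <= / 8^m * Uz * (2*(z - y))) by (apply Rmult_le_compat_l; lra).
      assert (/ 8^m * / 9^m / 2 * Uz * (z-x) <= / 8^m * Uz * (z-x) / 2).
      { assert (0 <= / 8^m * Uz * (z-x)) by nra.
        replace (/ 8^m * / 9^m / 2 * Uz * (z-x)) with ((/ 8^m * Uz * (z-x)) * (/9^m) / 2) by (unfold Rdiv; ring).
        assert ((/ 8^m * Uz * (z-x)) * (/9^m) <= (/ 8^m * Uz * (z-x)) * 1) by (apply Rmult_le_compat_l; lra).
        lra. }
      lra.
    + destruct (Rle_or_lt (z^2) (9*y^2)) as [C2|C2].
      * assert (Uz <= 9^m * Uy).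
        { unfold Uz, Uy. rewrite <- Rpow_mult_distr. apply pow_incr. nra. }
        assert (H9 : / 9^m * Uz <= Uy).
        { apply (Rmult_le_reg_l (9^m)). lra. rewrite <- Rmult_assoc, Rinv_r by lra. lra. }
        assert (/ 8^m * / 9^m / 2 * Uz * (z-x) <= Uy * (z-x)).
        { replace (/ 8^m * / 9^m / 2 * Uz * (z-x)) with ((/ 8^m / 2) * (/ 9^m * Uz) * (z-x)) by (unfold Rdiv; ring).
          apply Rmult_le_compat_r. lra.
          assert ((/ 8^m / 2) * (/ 9^m * Uz) <= 1 * (/ 9^m * Uz)).
          { apply Rmult_le_compat_r. nra. lra. }
          lra. }
        lra.
      * assert (C3 : z^2 <= 9 * x^2).
        { destruct (Rle_or_lt z 0) as [Hz|Hz].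
          - assert (0 <= (z-y)*(-(y+z))) by (apply Rmult_le_pos; lra). nra.
          - assert (3*y < z) by nra. assert (x < - z / 3) by lra. nra. }
        assert (Uz <= 9^m * Ux).
        { unfold Uz, Ux. rewrite <- Rpow_mult_distr. apply pow_incr. nra. }
        assert (H9 : / 9^m * Uz <= Ux).
        { apply (Rmult_le_reg_l (9^m)). lra. rewrite <- Rmult_assoc, Rinv_r by lra. lra. }
        assert (0 <= /8^m * Ux) by nra.
        assert (/ 8^m * Ux * (z-x) <= / 8^m * Ux * (2*(y - x))) by (apply Rmult_le_compat_l; lra).
        assert (/ 8^m * / 9^m / 2 * Uz * (z - x) <= / 8^m * Ux * (z-x) / 2).
        { replace (/ 8^m * / 9^m / 2 * Uz * (z - x)) with ((/8^m * (z-x)/2) * (/ 9^m * Uz)) by (unfold Rdiv; ring).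
          replace (/ 8^m * Ux * (z-x) / 2) with ((/8^m * (z-x)/2) * Ux) by (unfold Rdiv; ring).
          apply Rmult_le_compat_l. assert (0 <= /8^m * (z-x)) by nra. lra. lra. }
        lra.
Qed.

Lemma DD_sw12 m x y z : DD m x y z = DD m y x z.
Proof. unfold DD. rewrite (Rmult_comm (z-y) (z-x)). lra. Qed.

Lemma DD_sw23 m x y z : DD m x y z = DD m x z y.
Proof. unfold DD. rewrite (Rmult_comm (x-z) (x-y)). lra. Qed.

Lemma gg_neg m t : gg m (-t) = gg m t.
Proof. unfold gg. f_equal. ring. Qed.

Lemma DD_mirror m x y z : DD m x y z = DD m (-z) (-y) (-x).
Proof.
  unfold DD. rewrite !gg_neg.
  replace ((- z - - y) * (- z - - x)) with ((z-x)*(z-y)) by ring.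
  replace ((- y - - z) * (- y - - x)) with ((y-x)*(y-z)) by ring.
  replace ((- x - - z) * (- x - - y)) with ((x-y)*(x-z)) by ring.
  lra.
Qed.

Lemma DD_min m x y z : x < y -> y < z -> kap m * (1+x^2)^m <= DD m x y z.
Proof.
  intros. rewrite DD_mirror. destruct (DD_ord m (-z) (-y) (-x)) as [_ H1]; try lra.
  replace ((-x)^2) with (x^2) in H1 by ring. exact H1.
Qed.

Lemma DD_node m x y z : x <> y -> x <> z -> y <> z -> kap m * (1+x^2)^m <= DD m x y z.
Proof.
  intros Hxy Hxz Hyz.
  assert (Hxy' : x < y \/ y < x) by (destruct (Rtotal_order x y) as [|[|]]; auto; contradiction).
  assert (Hxz' : x < z \/ z < x) by (destruct (Rtotal_order x z) as [|[|]]; auto; contradiction).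
  assert (Hyz' : y < z \/ z < y) by (destruct (Rtotal_order y z) as [|[|]]; auto; contradiction).
  destruct Hxy' as [C1|C1]; destruct Hxz' as [C2|C2]; destruct Hyz' as [C3|C3];
  first [ exfalso; lra
        | apply DD_min; lra
        | rewrite DD_sw23; apply DD_min; lra
        | rewrite DD_sw23, DD_sw12; apply (DD_ord m z x y); lra
        | rewrite DD_sw12; apply (DD_ord m y x z); lra
        | rewrite DD_sw12, DD_sw23; apply (DD_ord m y z x); lra
        | rewrite DD_sw12, DD_sw23, DD_sw12; apply (DD_ord m z y x); lra ].
Qed.

Definition Kf m a1 a2 := a1^(S (2*m)) / (a1^2 + a2^2)^(S m).

Lemma odd_neg m x : (-x)^(S (2*m)) = - x^(S (2*m)).
Proof. rewrite <- !tech_pow_Rmult, !pow_sqr. replace (-x * -x) with (x*x) by ring. ring. Qed.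

Lemma Kf_t m a1 a2 : a1 <> 0 -> Kf m a1 a2 = / (a1 * gg m (a2/a1)).
Proof.
  intros H. unfold Kf, gg.
  assert (E : a1^2 + a2^2 = a1^2 * (1 + (a2/a1)^2)) by (field; auto).
  rewrite E, Rpow_mult_distr, <- pow_mult.
  replace (2 * S m)%nat with (S (2*m) + 1)%nat by lia. rewrite pow_add.
  assert (0 < 1 + (a2/a1)^2) by (pose proof (pow2_ge_0 (a2/a1)); lra).
  assert (a1^(S (2*m)) <> 0) by (apply pow_nonzero; auto).
  assert ((1 + (a2/a1)^2)^(S m) <> 0) by (apply pow_nonzero; lra).
  field. repeat split; auto.
Qed.

Definition Sf m a1 a2 b1 b2 :=
  - (Kf m a1 a2 * Kf m b1 b2 + Kf m b1 b2 * Kf m (-(a1+b1)) (-(a2+b2))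
     + Kf m (-(a1+b1)) (-(a2+b2)) * Kf m a1 a2).

Definition RHS m a1 a2 b1 b2 :=
  kap m * (a1*b2 - a2*b1)^2 / ((a1^2+a2^2) * (b1^2+b2^2) * ((-(a1+b1))^2 + (-(a2+b2))^2))
  * (b1^2 * (-(a1+b1))^2 / ((b1^2+b2^2) * ((-(a1+b1))^2 + (-(a2+b2))^2)))^m.

Lemma kap_pos m : 0 < kap m.
Proof. unfold kap. apply Rinv_0_lt_compat. pose proof (pow_lt 72 m ltac:(lra)). lra. Qed.

Lemma kap_le m : kap m <= 1.
Proof. unfold kap. pose proof (pow_R1_Rle 72 m ltac:(lra)). rewrite <- Rinv_1. apply Rinv_le_contravar; lra. Qed.

Lemma L1_A m a1 a2 b1 b2 : a1 <> 0 -> b1 <> 0 -> a1 + b1 <> 0 -> a1*b2 - a2*b1 <> 0 ->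
  RHS m a1 a2 b1 b2 <= Sf m a1 a2 b1 b2.
Proof.
  intros Ha Hb Hc HX.
  set (c1 := -(a1+b1)). set (c2 := -(a2+b2)).
  assert (Hc' : c1 <> 0) by (unfold c1; lra).
  unfold Sf, RHS. fold c1 c2.
  rewrite !Kf_t by auto.
  set (ta := a2/a1). set (tb := b2/b1). set (tc := c2/c1).
  set (X := a1*b2 - a2*b1) in *.
  assert (Hab : ta - tb = - X / (a1*b1)) by (unfold ta, tb, X; field; auto).
  assert (Hbc : tb - tc = - X / (b1*c1)) by (unfold tb, tc, X, c1, c2; field; auto).
  assert (Hca : tc - ta = - X / (c1*a1)) by (unfold ta, tc, X, c1, c2; field; auto).
  assert (Hab' : ta - tb <> 0) by (rewrite Hab; unfold Rdiv; apply Rmult_integral_contrapositive; split; [intro; apply HX; lra|apply Rinv_neq_0_compat; apply Rmult_integral_contrapositive; auto]).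
  assert (Hbc' : tb - tc <> 0) by (rewrite Hbc; unfold Rdiv; apply Rmult_integral_contrapositive; split; [intro; apply HX; lra|apply Rinv_neq_0_compat; apply Rmult_integral_contrapositive; auto]).
  assert (Hca' : tc - ta <> 0) by (rewrite Hca; unfold Rdiv; apply Rmult_integral_contrapositive; split; [intro; apply HX; lra|apply Rinv_neq_0_compat; apply Rmult_integral_contrapositive; auto]).
  assert (N1 : ta <> tb) by (intro E; apply Hab'; rewrite E; ring).
  assert (N2 : tb <> tc) by (intro E; apply Hbc'; rewrite E; ring).
  assert (N3 : ta <> tc) by (intro E; apply Hca'; rewrite E; ring).
  pose proof (DD_node m ta tb tc N1 N3 N2) as HD.
  set (A := 1 + ta^2). set (B := 1 + tb^2). set (C := 1 + tc^2).
  assert (HA : 0 < A) by (unfold A; pose proof (pow2_ge_0 ta); lra).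
  assert (HB : 0 < B) by (unfold B; pose proof (pow2_ge_0 tb); lra).
  assert (HC : 0 < C) by (unfold C; pose proof (pow2_ge_0 tc); lra).
  assert (gA : gg m ta = A * A^m) by (unfold gg; fold A; simpl; ring).
  assert (gB : gg m tb = B * B^m) by (unfold gg; fold B; simpl; ring).
  assert (gC : gg m tc = C * C^m) by (unfold gg; fold C; simpl; ring).
  assert (NA : a1^2 + a2^2 = a1^2 * A) by (unfold A, ta; field; auto).
  assert (NB : b1^2 + b2^2 = b1^2 * B) by (unfold B, tb; field; auto).
  assert (NC : c1^2 + c2^2 = c1^2 * C) by (unfold C, tc; field; auto).
  assert (HAm : 0 < A^m) by (apply pow_lt; auto).
  assert (HBm : 0 < B^m) by (apply pow_lt; auto).
  assert (HCm : 0 < C^m) by (apply pow_lt; auto).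
  assert (I1 : - (/ (a1 * gg m ta) * / (b1 * gg m tb) + / (b1 * gg m tb) * / (c1 * gg m tc) +
                / (c1 * gg m tc) * / (a1 * gg m ta))
            = X^2 * DD m ta tb tc / ((a1*b1*c1)^2 * gg m ta * gg m tb * gg m tc)).
  { assert (G1 : gg m ta <> 0) by (rewrite gA; apply Rmult_integral_contrapositive; split; lra).
    assert (G2 : gg m tb <> 0) by (rewrite gB; apply Rmult_integral_contrapositive; split; lra).
    assert (G3 : gg m tc <> 0) by (rewrite gC; apply Rmult_integral_contrapositive; split; lra).
    unfold DD. clearbody A B C. revert G1 G2 G3 N1 N2 N3. unfold X, ta, tb, tc, c1, c2 in *.
    generalize (gg m (a2/a1)) (gg m (b2/b1)) (gg m (- (a2 + b2) / - (a1 + b1))). intros g1 g2 g3 G1 G2 G3 N1 N2 N3.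
    field. repeat split; auto; intro E; apply HX; lra. }
  rewrite I1. rewrite NA, NB, NC.
  replace (b1 ^ 2 * c1 ^ 2 / (b1 ^ 2 * B * (c1 ^ 2 * C))) with (/ (B*C)) by (field; repeat split; lra || auto).
  rewrite pow_inv, Rpow_mult_distr, gA, gB, gC.
  set (den := (a1 * b1 * c1)^2 * (A * A^m) * (B * B^m) * (C * C^m)).
  assert (Hden : 0 < den).
  { unfold den. assert (HP : 0 < (a1*b1*c1)^2).
    { assert (a1*b1*c1 <> 0) by (repeat apply Rmult_integral_contrapositive; auto). 
      pose proof (pow2_ge_0 (a1*b1*c1)). assert ((a1*b1*c1)^2 <> 0) by (apply pow_nonzero; auto). lra. }
    generalize HP. generalize ((a1*b1*c1)^2). intros P HP'.
    repeat apply Rmult_lt_0_compat; auto. }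
  replace (kap m * X ^ 2 / (a1 ^ 2 * A * (b1 ^ 2 * B) * (c1 ^ 2 * C)) * / (B ^ m * C ^ m))
    with (X^2 * (kap m * (1 + ta^2)^m) / den).
  2:{ unfold den. fold A. field. repeat split; try lra; auto. }
  unfold Rdiv. apply Rmult_le_compat_r. apply Rlt_le, Rinv_0_lt_compat; auto.
  apply Rmult_le_compat_l. apply pow2_ge_0. exact HD.
Qed.

Lemma Kf_0 m a2 : Kf m 0 a2 = 0.
Proof. unfold Kf. simpl. unfold Rdiv. rewrite !Rmult_0_l. reflexivity. Qed.

Lemma Kf_neg m a1 a2 : Kf m (-a1) a2 = - Kf m a1 a2.
Proof. unfold Kf. rewrite odd_neg. replace ((-a1)^2) with (a1^2) by ring. unfold Rdiv. ring. Qed.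

Lemma sq_odd m x : x^(S (2*m)) * x^(S (2*m)) = x^2 * (x^2)^m * (x^2)^m.
Proof. rewrite <- (tech_pow_Rmult x (2*m)), pow_mult. ring. Qed.

Lemma sq_pos x : x <> 0 -> 0 < x^2.
Proof. intros. rewrite <- Rsqr_pow2. apply Rlt_0_sqr. auto. Qed.

Lemma Npos x y : x <> 0 -> 0 < x^2 + y^2.
Proof. intros. pose proof (pow2_ge_0 y). pose proof (sq_pos x H). lra. Qed.

Lemma Npos' x y : y <> 0 -> 0 < x^2 + y^2.
Proof. intros. pose proof (pow2_ge_0 x). pose proof (sq_pos y H). lra. Qed.

Lemma odd_form m x : x^(S (2*m)) = x * (x^2)^m.
Proof. rewrite <- (tech_pow_Rmult x (2*m)), pow_mult. ring. Qed.

Lemma tech_S x m : x^(S m) = x * x^m.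
Proof. reflexivity. Qed.

Lemma L1_a0 m a2 b1 b2 : 0*b2 - a2*b1 <> 0 -> RHS m 0 a2 b1 b2 <= Sf m 0 a2 b1 b2.
Proof.
  intros HX.
  assert (Ha2 : a2 <> 0) by (intro E; apply HX; rewrite E; ring).
  assert (Hb1 : b1 <> 0) by (intro E; apply HX; rewrite E; ring).
  unfold Sf, RHS. rewrite Kf_0. replace (-(0+b1)) with (-b1) by ring. rewrite Kf_neg. unfold Kf.
  replace ((-b1)^2) with (b1^2) by ring.
  rewrite !odd_form.
  set (Nb := b1^2+b2^2). set (Nc := b1^2 + (-(a2+b2))^2).
  assert (HNb : 0 < Nb) by (apply Npos; auto). assert (HNc : 0 < Nc) by (apply Npos; auto).
  assert (HQ : 0 < b1^2) by (apply sq_pos; auto).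
  replace (b1^2 * b1^2 / (Nb * Nc)) with (b1^2 * b1^2 * / (Nb*Nc)) by reflexivity.
  rewrite !Rpow_mult_distr, pow_inv, Rpow_mult_distr, (tech_S Nb m), (tech_S Nc m).
  assert (HQm : 0 < (b1^2)^m) by (apply pow_lt; auto).
  assert (HNbm : 0 < Nb^m) by (apply pow_lt; auto).
  assert (HNcm : 0 < Nc^m) by (apply pow_lt; auto).
  assert (Hk := kap_pos m). assert (Hk1 := kap_le m).
  match goal with |- ?A <= ?B =>
    assert (E : A = kap m * B) by (field; repeat split; try lra; apply sq_pos in Ha2; lra);
    assert (P : 0 <= B) end.
  { match goal with |- 0 <= ?B => replace B with (b1^2 * (b1^2)^m * (b1^2)^m * / (Nb * Nb^m * (Nc*Nc^m))) by (field; lra) end.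
    apply Rlt_le. apply Rmult_lt_0_compat. apply Rmult_lt_0_compat. apply Rmult_lt_0_compat. all: auto.
    apply Rinv_0_lt_compat. apply Rmult_lt_0_compat; apply Rmult_lt_0_compat; auto. }
  rewrite E. nra.
Qed.

Lemma L1_b0 m a1 a2 b2 : a1*b2 - a2*0 <> 0 -> RHS m a1 a2 0 b2 <= Sf m a1 a2 0 b2.
Proof.
  intros HX.
  assert (Ha1 : a1 <> 0) by (intro E; apply HX; rewrite E; ring).
  assert (Hb2 : b2 <> 0) by (intro E; apply HX; rewrite E; ring).
  unfold Sf, RHS. rewrite Kf_0. replace (-(a1+0)) with (-a1) by ring. rewrite Kf_neg. unfold Kf.
  replace ((-a1)^2) with (a1^2) by ring.
  rewrite !odd_form.
  set (Na := a1^2+a2^2). set (Nc := a1^2 + (-(a2+b2))^2).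
  assert (HNa : 0 < Na) by (apply Npos; auto). assert (HNc : 0 < Nc) by (apply Npos; auto).
  assert (HQ : 0 < a1^2) by (apply sq_pos; auto).
  assert (HNb : 0 < 0^2 + b2^2) by (apply Npos'; auto).
  rewrite (tech_S Na m), (tech_S Nc m).
  assert (HQm : 0 < (a1^2)^m) by (apply pow_lt; auto).
  assert (HNam : 0 < Na^m) by (apply pow_lt; auto).
  assert (HNcm : 0 < Nc^m) by (apply pow_lt; auto).
  assert (Hk := kap_pos m). assert (Hk1 := kap_le m).
  match goal with |- _ <= ?B => assert (P : 0 <= B) end.
  { match goal with |- 0 <= ?B => replace B with (a1^2 * (a1^2)^m * (a1^2)^m * / (Na * Na^m * (Nc*Nc^m))) by (field; lra) end.
    apply Rlt_le. apply Rmult_lt_0_compat. apply Rmult_lt_0_compat. apply Rmult_lt_0_compat. all: auto.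
    apply Rinv_0_lt_compat. apply Rmult_lt_0_compat; apply Rmult_lt_0_compat; auto. }
  destruct m as [|k].
  - match goal with |- ?A <= ?B =>
      assert (E : A = kap 0 * B) by (simpl; field; repeat split; lra) end.
    rewrite E. nra.
  - replace (0^2 * a1^2 / ((0^2 + b2^2) * Nc)) with 0 by (field; lra).
    rewrite (pow_i (S k)) by lia. apply Rle_trans with 0; [right; unfold Rdiv; ring | exact P].
Qed.

Lemma L1_c0 m a1 a2 b2 : a1*b2 - a2*(-a1) <> 0 -> RHS m a1 a2 (-a1) b2 <= Sf m a1 a2 (-a1) b2.
Proof.
  intros HX.
  assert (Ha1 : a1 <> 0) by (intro E; apply HX; rewrite E; ring).
  assert (Hb2 : a2 + b2 <> 0) by (intro E; apply HX; replace b2 with (-a2) by lra; ring).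
  unfold Sf, RHS. replace (-(a1 + -a1)) with 0 by ring. rewrite Kf_0. rewrite Kf_neg. unfold Kf.
  replace ((-a1)^2) with (a1^2) by ring.
  rewrite !odd_form.
  set (Na := a1^2+a2^2). set (Nb := a1^2 + b2^2).
  assert (HNa : 0 < Na) by (apply Npos; auto). assert (HNb : 0 < Nb) by (apply Npos; auto).
  assert (HQ : 0 < a1^2) by (apply sq_pos; auto).
  assert (HNc : 0 < 0^2 + (-(a2+b2))^2) by (apply Npos'; intro E; apply Hb2; lra).
  rewrite (tech_S Na m), (tech_S Nb m).
  assert (HQm : 0 < (a1^2)^m) by (apply pow_lt; auto).
  assert (HNam : 0 < Na^m) by (apply pow_lt; auto).
  assert (HNbm : 0 < Nb^m) by (apply pow_lt; auto).
  assert (Hk := kap_pos m). assert (Hk1 := kap_le m).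
  match goal with |- _ <= ?B => assert (P : 0 <= B) end.
  { match goal with |- 0 <= ?B => replace B with (a1^2 * (a1^2)^m * (a1^2)^m * / (Na * Na^m * (Nb*Nb^m))) by (field; lra) end.
    apply Rlt_le. apply Rmult_lt_0_compat. apply Rmult_lt_0_compat. apply Rmult_lt_0_compat. all: auto.
    apply Rinv_0_lt_compat. apply Rmult_lt_0_compat; apply Rmult_lt_0_compat; auto. }
  destruct m as [|k].
  - match goal with |- ?A <= ?B =>
      assert (E : A = kap 0 * B) by (simpl; field; repeat split; try lra; intro E; apply Hb2; lra) end.
    rewrite E. nra.
  - replace (a1^2 * 0^2 / (Nb * (0^2 + (-(a2+b2))^2))) with 0 by (field; lra).
    rewrite (pow_i (S k)) by lia. apply Rle_trans with 0; [right; unfold Rdiv; ring | exact P].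
Qed.

Lemma L1 m a1 a2 b1 b2 : a1*b2 - a2*b1 <> 0 -> RHS m a1 a2 b1 b2 <= Sf m a1 a2 b1 b2.
Proof.
  intros HX.
  destruct (Req_dec a1 0) as [Ha|Ha]. { subst a1. apply L1_a0; auto. }
  destruct (Req_dec b1 0) as [Hb|Hb]. { subst b1. apply L1_b0; auto. }
  destruct (Req_dec (a1+b1) 0) as [Hc|Hc].
  { replace b1 with (-a1) in * by lra. apply L1_c0; auto. }
  apply L1_A; auto.
Qed.

Lemma Kf_neg2 m a1 a2 : Kf m a1 (-a2) = Kf m a1 a2.
Proof. unfold Kf. replace ((-a2)^2) with (a2^2) by ring. reflexivity. Qed.

Lemma Sf_cyc m a1 a2 b1 b2 : Sf m a1 a2 b1 b2 = Sf m b1 b2 (-(a1+b1)) (-(a2+b2)).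
Proof.
  unfold Sf. replace (-(b1 + -(a1+b1))) with a1 by ring. replace (-(b2 + -(a2+b2))) with a2 by ring. ring.
Qed.

Definition Tm m a1 a2 b1 b2 := kap m * (/4)^m * (a1*b2-a2*b1)^2 /
  ((a1^2+a2^2)*(b1^2+b2^2)*((-(a1+b1))^2+(-(a2+b2))^2)).

Lemma Tm_cyc m a1 a2 b1 b2 : Tm m b1 b2 (-(a1+b1)) (-(a2+b2)) = Tm m a1 a2 b1 b2.
Proof.
  unfold Tm. replace (-(b1 + -(a1+b1))) with a1 by ring. replace (-(b2 + -(a2+b2))) with a2 by ring.
  replace (b1 * - (a2 + b2) - b2 * - (a1 + b1)) with (a1*b2-a2*b1) by ring.
  replace ((b1 ^ 2 + b2 ^ 2) * ((- (a1 + b1)) ^ 2 + (- (a2 + b2)) ^ 2) * (a1 ^ 2 + a2 ^ 2))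
    with ((a1 ^ 2 + a2 ^ 2) * (b1 ^ 2 + b2 ^ 2) * ((- (a1 + b1)) ^ 2 + (- (a2 + b2)) ^ 2)) by ring.
  reflexivity.
Qed.

Lemma Tm_swap m a1 a2 b1 b2 : Tm m a2 a1 b2 b1 = Tm m a1 a2 b1 b2.
Proof.
  unfold Tm.
  replace ((a2*b1-a1*b2)^2) with ((a1*b2-a2*b1)^2) by ring.
  replace ((a2 ^ 2 + a1 ^ 2) * (b2 ^ 2 + b1 ^ 2) * ((- (a2 + b2)) ^ 2 + (- (a1 + b1)) ^ 2))
    with ((a1 ^ 2 + a2 ^ 2) * (b1 ^ 2 + b2 ^ 2) * ((- (a1 + b1)) ^ 2 + (- (a2 + b2)) ^ 2)) by ring.
  reflexivity.
Qed.

Lemma RHS_nonneg m a1 a2 b1 b2 : a1*b2 - a2*b1 <> 0 -> 0 <= RHS m a1 a2 b1 b2.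
Proof.
  intros HX. unfold RHS.
  assert (Ha : 0 < a1^2+a2^2).
  { destruct (Req_dec a1 0). apply Npos'. intro E. apply HX. subst. ring. apply Npos; auto. }
  assert (Hb : 0 < b1^2+b2^2).
  { destruct (Req_dec b1 0). apply Npos'. intro E. apply HX. subst. ring. apply Npos; auto. }
  assert (Hc : 0 < (-(a1+b1))^2+(-(a2+b2))^2).
  { destruct (Req_dec (-(a1+b1)) 0). apply Npos'. intro E. apply HX.
    replace b1 with (-a1) by lra. replace b2 with (-a2) by lra. ring. apply Npos; auto. }
  pose proof (kap_pos m).
  apply Rmult_le_pos. unfold Rdiv. apply Rmult_le_pos. apply Rmult_le_pos. lra. apply pow2_ge_0.
  apply Rlt_le, Rinv_0_lt_compat. apply Rmult_lt_0_compat; [apply Rmult_lt_0_compat|]; auto.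
  apply pow_le. unfold Rdiv. apply Rmult_le_pos. apply Rmult_le_pos; apply pow2_ge_0.
  apply Rlt_le, Rinv_0_lt_compat. apply Rmult_lt_0_compat; auto.
Qed.

Lemma RHS_lb m a1 a2 b1 b2 : a1*b2 - a2*b1 <> 0 ->
  b1^2+b2^2 <= 2*b1^2 -> (-(a1+b1))^2+(-(a2+b2))^2 <= 2*(-(a1+b1))^2 ->
  Tm m a1 a2 b1 b2 <= RHS m a1 a2 b1 b2.
Proof.
  intros HX H1 H2. unfold Tm, RHS.
  assert (Ha : 0 < a1^2+a2^2).
  { destruct (Req_dec a1 0). apply Npos'. intro E. apply HX. subst. ring. apply Npos; auto. }
  assert (Hb : 0 < b1^2+b2^2).
  { destruct (Req_dec b1 0). apply Npos'. intro E. apply HX. subst. ring. apply Npos; auto. }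
  assert (Hc : 0 < (-(a1+b1))^2+(-(a2+b2))^2).
  { destruct (Req_dec (-(a1+b1)) 0). apply Npos'. intro E. apply HX.
    replace b1 with (-a1) by lra. replace b2 with (-a2) by lra. ring. apply Npos; auto. }
  set (Nb := b1^2+b2^2) in *. set (Nc := (-(a1+b1))^2+(-(a2+b2))^2) in *.
  set (Na := a1^2+a2^2) in *.
  assert (Hq : / 4 <= b1^2 * (-(a1+b1))^2 / (Nb * Nc)).
  { apply (Rmult_le_reg_r (Nb*Nc)). nra.
    replace (b1 ^ 2 * (- (a1 + b1)) ^ 2 / (Nb * Nc) * (Nb * Nc)) with (b1 ^ 2 * (- (a1 + b1)) ^ 2) by (field; lra).
    assert (0 <= Nb) by lra. assert (0 <= Nc) by lra. nra. }
  assert (Hq' : (/4)^m <= (b1^2 * (-(a1+b1))^2 / (Nb * Nc))^m).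
  { apply pow_incr. split. lra. auto. }
  pose proof (kap_pos m).
  set (W := (a1 * b2 - a2 * b1) ^ 2 / (Na * Nb * Nc)).
  assert (HW : 0 <= W). { unfold W, Rdiv. apply Rmult_le_pos. apply pow2_ge_0. apply Rlt_le, Rinv_0_lt_compat. apply Rmult_lt_0_compat; [apply Rmult_lt_0_compat|]; auto. }
  replace (kap m * (/ 4) ^ m * (a1 * b2 - a2 * b1) ^ 2 / (Na * Nb * Nc)) with ((kap m * W) * (/4)^m) by (unfold W, Rdiv; ring).
  replace (kap m * (a1 * b2 - a2 * b1) ^ 2 / (Na * Nb * Nc)) with (kap m * W) by (unfold W, Rdiv; ring).
  apply Rmult_le_compat_l. nra. auto.
Qed.

Lemma main_ab m a1 a2 b1 b2 : a1*b2 - a2*b1 <> 0 ->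
  Tm m a1 a2 b1 b2 <= Sf m a1 a2 b1 b2 + Sf m a2 a1 b2 b1.
Proof.
  intros HX.
  set (c1 := -(a1+b1)). set (c2 := -(a2+b2)).
  assert (HXbc : b1*c2 - b2*c1 <> 0) by (intro E; apply HX; unfold c1, c2 in E; lra).
  assert (HXca : c1*a2 - c2*a1 <> 0) by (intro E; apply HX; unfold c1, c2 in E; lra).
  assert (HXs : a2*b1 - a1*b2 <> 0) by (intro E; apply HX; lra).
  assert (HXbcs : b2*c1 - b1*c2 <> 0) by (intro E; apply HX; unfold c1, c2 in E; lra).
  assert (HXcas : c2*a1 - c1*a2 <> 0) by (intro E; apply HX; unfold c1, c2 in E; lra).
  assert (Ea : -(b1+c1) = a1) by (unfold c1; ring). assert (Ea2 : -(b2+c2) = a2) by (unfold c2; ring).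
  assert (Eb : -(c1+a1) = b1) by (unfold c1; ring). assert (Eb2 : -(c2+a2) = b2) by (unfold c2; ring).
  assert (S1b : Sf m a1 a2 b1 b2 = Sf m b1 b2 c1 c2) by apply Sf_cyc.
  assert (S1c : Sf m a1 a2 b1 b2 = Sf m c1 c2 a1 a2).
  { rewrite S1b, Sf_cyc. rewrite Ea, Ea2. reflexivity. }
  assert (S2b : Sf m a2 a1 b2 b1 = Sf m b2 b1 c2 c1) by apply Sf_cyc.
  assert (S2c : Sf m a2 a1 b2 b1 = Sf m c2 c1 a2 a1).
  { rewrite S2b, Sf_cyc. fold c1 c2. rewrite Ea, Ea2. reflexivity. }
  assert (T1b : Tm m b1 b2 c1 c2 = Tm m a1 a2 b1 b2) by apply Tm_cyc.
  assert (T1c : Tm m c1 c2 a1 a2 = Tm m a1 a2 b1 b2).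
  { rewrite <- T1b, <- (Tm_cyc m b1 b2 c1 c2). rewrite Ea, Ea2. reflexivity. }
  assert (T2a : Tm m a2 a1 b2 b1 = Tm m a1 a2 b1 b2) by apply Tm_swap.
  assert (T2b : Tm m b2 b1 c2 c1 = Tm m a1 a2 b1 b2) by (rewrite Tm_swap; apply T1b).
  assert (T2c : Tm m c2 c1 a2 a1 = Tm m a1 a2 b1 b2) by (rewrite Tm_swap; apply T1c).
  pose proof (L1 m a1 a2 b1 b2 HX) as L1a. pose proof (RHS_nonneg m a1 a2 b1 b2 HX) as N1a.
  pose proof (L1 m b1 b2 c1 c2 HXbc) as L1b. pose proof (RHS_nonneg m b1 b2 c1 c2 HXbc) as N1b.
  pose proof (L1 m c1 c2 a1 a2 HXca) as L1c.
  pose proof (L1 m a2 a1 b2 b1 HXs) as L2a. pose proof (RHS_nonneg m a2 a1 b2 b1 HXs) as N2a.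
  pose proof (L1 m b2 b1 c2 c1 HXbcs) as L2b.
  pose proof (L1 m c2 c1 a2 a1 HXcas) as L2c.
  pose proof (RHS_lb m a1 a2 b1 b2 HX) as Ra. fold c1 c2 in Ra.
  pose proof (RHS_lb m b1 b2 c1 c2 HXbc) as Rb. rewrite Ea, Ea2 in Rb.
  pose proof (RHS_lb m c1 c2 a1 a2 HXca) as Rc. rewrite Eb, Eb2 in Rc.
  pose proof (RHS_lb m a2 a1 b2 b1 HXs) as Qa. fold c1 c2 in Qa.
  pose proof (RHS_lb m b2 b1 c2 c1 HXbcs) as Qb. rewrite Ea, Ea2 in Qb.
  pose proof (RHS_lb m c2 c1 a2 a1 HXcas) as Qc. rewrite Eb, Eb2 in Qc.
  rewrite T1b in Rb. rewrite T1c in Rc. rewrite T2a in Qa. rewrite T2b in Qb. rewrite T2c in Qc.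
  rewrite <- S1b in L1b. rewrite <- S1c in L1c. rewrite <- S2b in L2b. rewrite <- S2c in L2c.
  pose proof (RHS_nonneg m a1 a2 b1 b2 HX).
  assert (P1 : 0 <= Sf m a1 a2 b1 b2) by lra.
  assert (P2 : 0 <= Sf m a2 a1 b2 b1) by lra.
  assert (Ca : a1^2+a2^2 <= 2*a1^2 \/ a2^2+a1^2 <= 2*a2^2) by (destruct (Rle_or_lt (a2^2) (a1^2)); [left|right]; lra).
  assert (Cb : b1^2+b2^2 <= 2*b1^2 \/ b2^2+b1^2 <= 2*b2^2) by (destruct (Rle_or_lt (b2^2) (b1^2)); [left|right]; lra).
  assert (Cc : c1^2+c2^2 <= 2*c1^2 \/ c2^2+c1^2 <= 2*c2^2) by (destruct (Rle_or_lt (c2^2) (c1^2)); [left|right]; lra).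
  destruct Ca as [Ca|Ca]; destruct Cb as [Cb|Cb]; destruct Cc as [Cc|Cc].
  - specialize (Ra Cb Cc). lra.
  - specialize (Rc Ca Cb). lra.
  - specialize (Rb Cc Ca). lra.
  - specialize (Qa Cb Cc). lra.
  - specialize (Ra Cb Cc). lra.
  - specialize (Qb Cc Ca). lra.
  - specialize (Qc Ca Cb). lra.
  - specialize (Qa Cb Cc). lra.
Qed.

Lemma K1_Kf m x y : K1 (S m) (x, y) = Kf m x y.
Proof. unfold K1, Kf, norm2. simpl fst. simpl snd. replace (2 * S m - 1)%nat with (S (2*m)) by lia. reflexivity. Qed.

Lemma K2_Kf m x y : K2 (S m) (x, y) = Kf m y x.
Proof. unfold K2, Kf, norm2. simpl fst. simpl snd. replace (2 * S m - 1)%nat with (S (2*m)) by lia.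
  replace (x^2+y^2) with (y^2+x^2) by ring. reflexivity. Qed.

Lemma p1_Sf m x1 y1 x2 y2 x3 y3 :
  p1 (S m) (x1,y1) (x2,y2) (x3,y3) = Sf m (x1-x2) (y1-y2) (x2-x3) (y2-y3).
Proof.
  unfold p1, psym, psub. simpl fst. simpl snd. rewrite !K1_Kf. unfold Sf.
  replace (-((x1-x2)+(x2-x3))) with (-(x1-x3)) by ring.
  replace (-((y1-y2)+(y2-y3))) with (-(y1-y3)) by ring.
  replace (x2 - x1) with (-(x1-x2)) by ring. replace (y2 - y1) with (-(y1-y2)) by ring.
  replace (x3 - x1) with (-(x1-x3)) by ring. replace (y3 - y1) with (-(y1-y3)) by ring.
  replace (x3 - x2) with (-(x2-x3)) by ring. replace (y3 - y2) with (-(y2-y3)) by ring.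
  rewrite !Kf_neg, !Kf_neg2. ring.
Qed.

Lemma p2_Sf m x1 y1 x2 y2 x3 y3 :
  p2 (S m) (x1,y1) (x2,y2) (x3,y3) = Sf m (y1-y2) (x1-x2) (y2-y3) (x2-x3).
Proof.
  unfold p2, psym, psub. simpl fst. simpl snd. rewrite !K2_Kf. unfold Sf.
  replace (-((x1-x2)+(x2-x3))) with (-(x1-x3)) by ring.
  replace (-((y1-y2)+(y2-y3))) with (-(y1-y3)) by ring.
  replace (x2 - x1) with (-(x1-x2)) by ring. replace (y2 - y1) with (-(y1-y2)) by ring.
  replace (x3 - x1) with (-(x1-x3)) by ring. replace (y3 - y1) with (-(y1-y3)) by ring.
  replace (x3 - x2) with (-(x2-x3)) by ring. replace (y3 - y2) with (-(y2-y3)) by ring.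
  rewrite !Kf_neg, !Kf_neg2. ring.
Qed.

Lemma Kf_scale m l x y : l <> 0 -> 0 < x^2 + y^2 -> Kf m (l*x) (l*y) = / l * Kf m x y.
Proof.
  intros Hl HN. unfold Kf.
  replace ((l*x)^2 + (l*y)^2) with (l^2 * (x^2+y^2)) by ring.
  rewrite !Rpow_mult_distr, <- pow_mult.
  replace (2 * S m)%nat with (S (2*m) + 1)%nat by lia. rewrite pow_add.
  assert (l^(S (2*m)) <> 0) by (apply pow_nonzero; auto).
  assert ((x^2+y^2)^(S m) <> 0) by (apply pow_nonzero; lra).
  field. repeat split; auto.
Qed.

Lemma Sf_col m a1 a2 l : l <> 0 -> 1 + l <> 0 -> 0 < a1^2 + a2^2 ->
  Sf m a1 a2 (l*a1) (l*a2) = 0.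
Proof.
  intros Hl Hl1 HN. unfold Sf.
  replace (-(a1 + l*a1)) with ((-(1+l))*a1) by ring.
  replace (-(a2 + l*a2)) with ((-(1+l))*a2) by ring.
  assert (-(1+l) <> 0) by (intro E; apply Hl1; lra).
  rewrite !Kf_scale; auto. field. split; auto.
Qed.

Lemma Sf_col' m a1 a2 b1 b2 : a1*b2 - a2*b1 = 0 -> 0 < a1^2 + a2^2 -> 0 < b1^2+b2^2 ->
  0 < (a1+b1)^2 + (a2+b2)^2 -> Sf m a1 a2 b1 b2 = 0 /\ Sf m a2 a1 b2 b1 = 0.
Proof.
  intros HX Ha Hb Hc.
  assert (exists l, b1 = l*a1 /\ b2 = l*a2) as [l [E1 E2]].
  { destruct (Req_dec a1 0) as [H0|H0].
    - assert (Ha2 : a2 <> 0) by (intro; subst; simpl in Ha; lra).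
      exists (b2/a2). split. subst a1. assert (Hab : a2*b1 = 0) by lra.
      apply Rmult_integral in Hab. destruct Hab as [Hab|Hab]; [contradiction|]. rewrite Hab. ring.
      field; auto.
    - exists (b1/a1). split. field; auto. apply (Rmult_eq_reg_l a1); auto. field_simplify; auto. lra. }
  subst b1 b2.
  assert (l <> 0) by (intro; subst; simpl in Hb; lra).
  assert (1 + l <> 0).
  { intro E. replace (a1 + l*a1) with ((1+l)*a1) in Hc by ring. replace (a2 + l*a2) with ((1+l)*a2) in Hc by ring.
    rewrite E in Hc. simpl in Hc. lra. }
  split; apply Sf_col; auto. lra.
Qed.

Lemma circum x1 y1 x2 y2 x3 y3 p q r :
  (x1-p)^2+(y1-q)^2 = r^2 -> (x2-p)^2+(y2-q)^2 = r^2 -> (x3-p)^2+(y3-q)^2 = r^2 ->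
  4 * ((x2-x1)*(y3-y1) - (y2-y1)*(x3-x1))^2 * r^2 =
  ((x2-x1)^2+(y2-y1)^2) * ((x3-x1)^2+(y3-y1)^2) * ((x3-x2)^2+(y3-y2)^2).
Proof.
  intros H1 H2 H3.
  set (u1 := x2-x1). set (u2 := y2-y1). set (v1 := x3-x1). set (v2 := y3-y1).
  set (P := p - x1). set (Q := q - y1).
  assert (Ku : 2*(u1*P+u2*Q) - (u1^2+u2^2) = 0) by (unfold u1,u2,P,Q; nra).
  assert (Kv : 2*(v1*P+v2*Q) - (v1^2+v2^2) = 0) by (unfold v1,v2,P,Q; nra).
  set (D := u1*v2 - u2*v1).
  assert (EP : 2*D*P = (u1^2+u2^2)*v2 - (v1^2+v2^2)*u2).
  { assert (E : 2*D*P - ((u1^2+u2^2)*v2 - (v1^2+v2^2)*u2) =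
       v2 * (2*(u1*P+u2*Q) - (u1^2+u2^2)) - u2 * (2*(v1*P+v2*Q) - (v1^2+v2^2))) by (unfold D; ring).
    rewrite Ku, Kv in E. lra. }
  assert (EQ : 2*D*Q = u1*(v1^2+v2^2) - v1*(u1^2+u2^2)).
  { assert (E : 2*D*Q - (u1*(v1^2+v2^2) - v1*(u1^2+u2^2)) =
       u1 * (2*(v1*P+v2*Q) - (v1^2+v2^2)) - v1 * (2*(u1*P+u2*Q) - (u1^2+u2^2))) by (unfold D; ring).
    rewrite Ku, Kv in E. lra. }
  assert (Hr : r^2 = P^2 + Q^2) by (unfold P, Q; lra).
  replace ((x3-x2)^2+(y3-y2)^2) with ((v1-u1)^2+(v2-u2)^2) by (unfold u1,u2,v1,v2; ring).
  fold u1 u2 v1 v2. fold D.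
  replace (4 * D^2 * r^2) with ((2*D*P)^2 + (2*D*Q)^2) by (rewrite Hr; ring).
  rewrite EP, EQ. ring.
Qed.

Lemma pt_ne x1 y1 x2 y2 : (x1,y1) <> (x2,y2) -> 0 < (x1-x2)^2 + (y1-y2)^2.
Proof.
  intros H. destruct (Req_dec (x1-x2) 0) as [E|E].
  - apply Npos'. intro E2. apply H. f_equal; lra.
  - apply Npos; auto.
Qed.

Lemma dist_sq x y p q r : 0 < r -> Defs.dist (x,y) (p,q) = r -> (x-p)^2 + (y-q)^2 = r^2.
Proof.
  unfold Defs.dist, norm2, psub. simpl. intros Hr H.
  assert (0 <= (x-p)^2 + (y-q)^2) by (pose proof (pow2_ge_0 (x-p)); pose proof (pow2_ge_0 (y-q)); lra).
  rewrite <- H. rewrite !Rmult_1_r, sqrt_sqrt; [ring|]. simpl in H0. lra.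
Qed.

Theorem lemma2p1 (n : nat) (hn : (1 <= n)%nat) :
  exists c1 : R, 0 < c1 /\
    forall (z1 z2 z3 : pt) (c : R),
      z1 <> z2 -> z1 <> z3 -> z2 <> z3 ->
      is_menger z1 z2 z3 c ->
      p1 n z1 z2 z3 + p2 n z1 z2 z3 >= c1 * c ^ 2.
Proof.
  destruct n as [|m]; [lia|].
  exists (kap m * (/4)^m / 4). split.
  { pose proof (kap_pos m). assert (0 < (/4)^m) by (apply pow_lt; lra).
    apply Rmult_lt_0_compat; [apply Rmult_lt_0_compat|]; lra. }
  intros [x1 y1] [x2 y2] [x3 y3] c H12 H13 H23 HM.
  rewrite p1_Sf, p2_Sf.
  pose proof (pt_ne _ _ _ _ H12) as N12.
  pose proof (pt_ne _ _ _ _ H13) as N13.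
  pose proof (pt_ne _ _ _ _ H23) as N23.
  destruct HM as [[Hcol Hc] | [Hncol [w [r [Hr [D1 [D2 [D3 Hc]]]]]]]].
  - subst c. unfold collinear in Hcol. simpl in Hcol.
    destruct (Sf_col' m (x1-x2) (y1-y2) (x2-x3) (y2-y3)) as [E1 E2].
    + rewrite <- Hcol. ring.
    + auto.
    + auto.
    + replace (x1 - x2 + (x2 - x3)) with (x1-x3) by ring. replace (y1 - y2 + (y2 - y3)) with (y1-y3) by ring. auto.
    + rewrite E1, E2. simpl. lra.
  - unfold collinear in Hncol. simpl in Hncol.
    destruct w as [p q].
    apply dist_sq in D1; auto. apply dist_sq in D2; auto. apply dist_sq in D3; auto.
    pose proof (circum _ _ _ _ _ _ _ _ _ D1 D2 D3) as HC.
    assert (HX : (x1-x2)*(y2-y3) - (y1-y2)*(x2-x3) <> 0).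
    { intro E. apply Hncol. rewrite <- E. ring. }
    pose proof (main_ab m (x1-x2) (y1-y2) (x2-x3) (y2-y3) HX) as HM.
    enough (Tm m (x1 - x2) (y1 - y2) (x2 - x3) (y2 - y3) = kap m * (/ 4) ^ m / 4 * c ^ 2) by lra.
    subst c. unfold Tm.
    replace ((x1-x2)*(y2-y3) - (y1-y2)*(x2-x3)) with ((x2-x1)*(y3-y1) - (y2-y1)*(x3-x1)) by ring.
    replace ((x1 - x2) ^ 2 + (y1 - y2) ^ 2) with ((x2-x1)^2+(y2-y1)^2) by ring.
    replace ((x2 - x3) ^ 2 + (y2 - y3) ^ 2) with ((x3-x2)^2+(y3-y2)^2) by ring.
    replace ((- (x1 - x2 + (x2 - x3))) ^ 2 + (- (y1 - y2 + (y2 - y3))) ^ 2) with ((x3-x1)^2+(y3-y1)^2) by ring.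
    set (D := (x2 - x1) * (y3 - y1) - (y2 - y1) * (x3 - x1)) in *.
    set (Nu := (x2 - x1) ^ 2 + (y2 - y1) ^ 2) in *.
    set (Nv := (x3 - x1) ^ 2 + (y3 - y1) ^ 2) in *.
    set (Nw := (x3 - x2) ^ 2 + (y3 - y2) ^ 2) in *.
    assert (HNu : 0 < Nu) by (unfold Nu; replace ((x2 - x1) ^ 2 + (y2 - y1) ^ 2) with ((x1 - x2) ^ 2 + (y1 - y2) ^ 2) by ring; auto).
    assert (HNv : 0 < Nv) by (unfold Nv; replace ((x3 - x1) ^ 2 + (y3 - y1) ^ 2) with ((x1 - x3) ^ 2 + (y1 - y3) ^ 2) by ring; auto).
    assert (HNw : 0 < Nw) by (unfold Nw; replace ((x3 - x2) ^ 2 + (y3 - y2) ^ 2) with ((x2 - x3) ^ 2 + (y2 - y3) ^ 2) by ring; auto).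
    assert (HD2 : D^2 = Nu * Nw * Nv / (4 * r^2)).
    { assert (Hr0 : r <> 0) by lra. assert (r^2 <> 0) by (apply pow_nonzero; lra).
      apply (Rmult_eq_reg_r (4 * r^2)). 2: (apply Rmult_integral_contrapositive; split; [lra|auto]).
      replace (Nu * Nw * Nv / (4 * r ^ 2) * (4 * r ^ 2)) with (Nu * Nw * Nv) by (field; auto).
      replace (D^2*(4*r^2)) with (4*D^2*r^2) by ring. rewrite HC. ring. }
    rewrite HD2. assert (Hr0 : r <> 0) by lra. field. repeat split; try lra.
Qed.
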